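(* Let $\phi$ be an even function in $\mathcal{S}$ with $\int_{-\infty}^\infty\phi(x)\,dx=1$. For $k\in\mathbb{N}$ and $c\in\mathbb{R}$ define $\phi_{k,c}(x)=k\phi(k(x-c))$. Then for every $f\in SG(\mathbb{R})$ and every $c\in\mathbb{R}$, $$f(c)=\lim_{k\to\infty}\int_{-\infty}^\infty f(x)\phi_{k,c}(x)\,dx.$$
   Context: A function $f:\mathbb{R}\to\mathbb{C}$ is piecewise continuous if on each bounded subinterval it is continuous except at finitely many points, at which it has finite one-sided limits. $PC_{bj}$ is the set of piecewise continuous $f:\mathbb{R}\to\mathbb{C}$ satisfying $f(x)=\tfrac12\big(f(x+)+f(x-)\big)$ for every $x$. $SG(\mathbb{R})$ is the set of $f\in PC_{bj}$ for which there exist $C>0$, $N\in\mathbb{N}$ with $\int_{-R}^{R}|f|\le C(1+R)^N$ for all $R>0$. $\mathcal{S}$ is the set of infinitely differentiable $\phi:\mathbb{R}\to\mathbb{C}$ with $\lim_{x\to\pm\infty}x^m\phi^{(n)}(x)=0$ for all integers $m,n\ge0$. *)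

(* Defs.v *)
From Stdlib Require Import Reals List.
From Coquelicot Require Import Coquelicot.
Open Scope R_scope.

Definition piecewise_continuous (f : R -> C) : Prop :=
  forall a b : R, exists l : list R,
    (forall x, a <= x <= b -> ~ In x l -> continuous f x) /\
    (forall x, In x l ->
       (exists Lm : C, filterlim f (at_left x) (locally Lm)) /\
       (exists Lp : C, filterlim f (at_right x) (locally Lp))).

Definition PC_bj (f : R -> C) : Prop :=
  piecewise_continuous f /\
  forall x : R, exists Lp Lm : C,
    filterlim f (at_right x) (locally Lp) /\
    filterlim f (at_left x) (locally Lm) /\
    f x = Cmult (Cplus Lp Lm) (RtoC (/ 2)).

Definition SG (f : R -> C) : Prop :=
  PC_bj f /\
  exists (Cst : R) (N : nat), 0 < Cst /\
    forall r : R, 0 < r -> RInt (fun x => Cmod (f x)) (- r) r <= Cst * (1 + r) ^ N.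

Definition Schwartz (phi : R -> C) : Prop :=
  exists D : nat -> R -> C,
    D 0%nat = phi /\
    (forall n x, is_derive (D n) x (D (S n) x)) /\
    (forall m n : nat,
       filterlim (fun x => Cmult (RtoC (x ^ m)) (D n x)) (Rbar_locally p_infty) (locally (RtoC 0)) /\
       filterlim (fun x => Cmult (RtoC (x ^ m)) (D n x)) (Rbar_locally m_infty) (locally (RtoC 0))).

Definition phi_kc (phi : R -> C) (k : nat) (c : R) : R -> C :=
  fun x => Cmult (RtoC (INR k)) (phi (INR k * (x - c))).

(* Main.v *)
Require Import Defs.
From Stdlib Require Import Reals List Lra Lia ZArith FunctionalExtensionality.
From Coquelicot Require Import Coquelicot.
Open Scope R_scope.

Definition PWC {V : UniformSpace} (g : R -> V) : Prop :=
  (forall a b : R, exists l : list R,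
     forall x, a <= x <= b -> ~ In x l -> continuous g x) /\
  (forall x, (exists L, filterlim g (at_right x) (locally L)) /\
             (exists L, filterlim g (at_left x) (locally L))).

Lemma ex_RInt_base {V : CompleteNormedModule R_AbsRing} (g : R -> V) a b La Lb :
  a < b -> (forall x, a < x < b -> continuous g x) ->
  filterlim g (at_right a) (locally La) -> filterlim g (at_left b) (locally Lb) ->
  ex_RInt g a b.
Proof.
  intros Hab Hc Ha Hb.
  set (h := fun x => if Rle_dec x a then La else if Rle_dec b x then Lb else g x).
  apply ex_RInt_ext with h.
  { intros x Hx. rewrite Rmin_left in Hx by lra. rewrite Rmax_right in Hx by lra.
    unfold h. destruct (Rle_dec x a); [lra|]. destruct (Rle_dec b x); [lra|]. reflexivity. }
  apply ex_RInt_continuous.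
  intros z Hz. rewrite Rmin_left in Hz by lra. rewrite Rmax_right in Hz by lra.
  destruct (Req_dec z a) as [->|Hza].
  - unfold continuous. replace (h a) with La by (unfold h; destruct (Rle_dec a a); [reflexivity|lra]).
    apply filterlim_locally. intros eps.
    pose proof (proj1 (filterlim_locally _ _) Ha eps) as Hr. unfold at_right, within in Hr.
    assert (Hlt : locally a (fun y => y < b)) by (apply open_lt; exact Hab).
    generalize (filter_and _ _ Hr Hlt). apply filter_imp.
    intros y [H1 H2]. unfold h. destruct (Rle_dec y a). apply ball_center.
    destruct (Rle_dec b y). lra. apply H1. lra.
  - destruct (Req_dec z b) as [->|Hzb].
    + unfold continuous. replace (h b) with Lb by (unfold h; destruct (Rle_dec b a); [lra|];
        destruct (Rle_dec b b); [reflexivity|lra]).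
      apply filterlim_locally. intros eps.
      pose proof (proj1 (filterlim_locally _ _) Hb eps) as Hr. unfold at_left, within in Hr.
      assert (Hlt : locally b (fun y => a < y)) by (apply open_gt; exact Hab).
      generalize (filter_and _ _ Hr Hlt). apply filter_imp.
      intros y [H1 H2]. unfold h. destruct (Rle_dec y a). lra.
      destruct (Rle_dec b y). apply ball_center. apply H1. lra.
    + assert (Hz' : a < z < b) by lra.
      apply continuous_ext_loc with g.
      2: apply Hc; exact Hz'.
      assert (H1 : locally z (fun y => a < y)) by (apply open_gt; lra).
      assert (H2 : locally z (fun y => y < b)) by (apply open_lt; lra).
      generalize (filter_and _ _ H1 H2). apply filter_imp.
      intros y [Hy1 Hy2]. unfold h. destruct (Rle_dec y a). lra. destruct (Rle_dec b y). lra. reflexivity.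
Qed.

Lemma ex_RInt_list {V : CompleteNormedModule R_AbsRing} (g : R -> V) :
  (forall x, (exists L, filterlim g (at_right x) (locally L)) /\
             (exists L, filterlim g (at_left x) (locally L))) ->
  forall l a b, a < b -> (forall x, a < x < b -> ~ In x l -> continuous g x) ->
  ex_RInt g a b.
Proof.
  intros Hlim l. induction l as [|p l IH]; intros a b Hab Hc.
  - destruct (Hlim a) as [[La HLa] _]. destruct (Hlim b) as [_ [Lb HLb]].
    apply (ex_RInt_base g a b La Lb Hab); auto.
  - destruct (Rlt_dec a p) as [Hap|Hap]; [destruct (Rlt_dec p b) as [Hpb|Hpb]|].
    + apply ex_RInt_Chasles with p.
      * apply IH; [exact Hap|]. intros x Hx Hn. apply Hc; [lra|].
        intros [E|E]; [lra|tauto].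
      * apply IH; [exact Hpb|]. intros x Hx Hn. apply Hc; [lra|].
        intros [E|E]; [lra|tauto].
    + apply IH; [exact Hab|]. intros x Hx Hn. apply Hc; [lra|].
      intros [E|E]; [lra|tauto].
    + apply IH; [exact Hab|]. intros x Hx Hn. apply Hc; [lra|].
      intros [E|E]; [lra|tauto].
Qed.

Lemma PWC_ex_RInt {V : CompleteNormedModule R_AbsRing} (g : R -> V) :
  PWC g -> forall a b, ex_RInt g a b.
Proof.
  intros [Hl Hlim].
  assert (K : forall a b, a < b -> ex_RInt g a b).
  { intros a b Hab. destruct (Hl a b) as [l Hc].
    apply (ex_RInt_list g Hlim l a b Hab). intros x Hx Hn. apply Hc; [lra|exact Hn]. }
  intros a b. destruct (Rtotal_order a b) as [H|[H|H]].
  - apply K, H.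
  - subst. apply ex_RInt_point.
  - apply ex_RInt_swap, K, H.
Qed.

Lemma PWC_comp2 {U V W : UniformSpace} (g : R -> U) (h : R -> V) (F : U -> V -> W) :
  PWC g -> (forall x, continuous h x) ->
  (forall u v, filterlim (fun p : U * V => F (fst p) (snd p))
      (filter_prod (locally u) (locally v)) (locally (F u v))) ->
  PWC (fun x => F (g x) (h x)).
Proof.
  intros [Hl Hlim] Hh HF. split.
  - intros a b. destruct (Hl a b) as [l Hc]. exists l. intros x Hx Hn.
    unfold continuous. apply (filterlim_comp_2 (G:=locally (g x)) (H:=locally (h x)) g h F).
    + apply Hc; assumption.
    + apply Hh.
    + apply HF.
  - intros x. destruct (Hlim x) as [[L1 H1] [L2 H2]]. split.
    + exists (F L1 (h x)). apply (filterlim_comp_2 (G:=locally L1) (H:=locally (h x)) g h F); [exact H1| |apply HF].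
      eapply filterlim_filter_le_1; [|apply Hh].
      intros P HP. unfold at_right, within. apply filter_imp with P; auto.
    + exists (F L2 (h x)). apply (filterlim_comp_2 (G:=locally L2) (H:=locally (h x)) g h F); [exact H2| |apply HF].
      eapply filterlim_filter_le_1; [|apply Hh].
      intros P HP. unfold at_left, within. apply filter_imp with P; auto.
Qed.

Lemma C_fst_lim {T} (F : (T -> Prop) -> Prop) {FF : Filter F} (g : T -> C) (l : C) :
  filterlim g F (locally l) -> filterlim (fun x => fst (g x)) F (locally (fst l)).
Proof.
  intros H. apply filterlim_locally. intros eps.
  generalize (proj1 (filterlim_locally _ _) H eps). apply filter_imp.
  intros x [H1 H2]. exact H1.
Qed.
Lemma C_snd_lim {T} (F : (T -> Prop) -> Prop) {FF : Filter F} (g : T -> C) (l : C) :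
  filterlim g F (locally l) -> filterlim (fun x => snd (g x)) F (locally (snd l)).
Proof.
  intros H. apply filterlim_locally. intros eps.
  generalize (proj1 (filterlim_locally _ _) H eps). apply filter_imp.
  intros x [H1 H2]. exact H2.
Qed.
Lemma C_pair_lim {T} (F : (T -> Prop) -> Prop) {FF : Filter F} (g : T -> C) (a b : R) :
  filterlim (fun x => fst (g x)) F (locally a) -> filterlim (fun x => snd (g x)) F (locally b) ->
  filterlim g F (locally ((a, b) : C)).
Proof.
  intros H1 H2. apply filterlim_locally. intros eps.
  generalize (filter_and _ _ (proj1 (filterlim_locally _ _) H1 eps) (proj1 (filterlim_locally _ _) H2 eps)).
  apply filter_imp. intros x [K1 K2]. split; assumption.
Qed.

Lemma R_mult_lim {T} (F : (T -> Prop) -> Prop) {FF : Filter F} (u v : T -> R) a b :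
  filterlim u F (locally a) -> filterlim v F (locally b) ->
  filterlim (fun x => u x * v x) F (locally (a * b)).
Proof.
  intros H1 H2. apply (filterlim_comp_2 (G:=locally a) (H:=locally b) u v Rmult H1 H2).
  apply (filterlim_mult (K:=R_AbsRing) a b).
Qed.
Lemma R_plus_lim {T} (F : (T -> Prop) -> Prop) {FF : Filter F} (u v : T -> R) a b :
  filterlim u F (locally a) -> filterlim v F (locally b) ->
  filterlim (fun x => u x + v x) F (locally (a + b)).
Proof.
  intros H1 H2. apply (filterlim_comp_2 (G:=locally a) (H:=locally b) u v Rplus H1 H2).
  apply (filterlim_plus (V:=R_NormedModule) a b).
Qed.
Lemma R_opp_lim {T} (F : (T -> Prop) -> Prop) {FF : Filter F} (u : T -> R) a :
  filterlim u F (locally a) -> filterlim (fun x => - u x) F (locally (- a)).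
Proof.
  intros H1. apply (filterlim_comp _ _ _ u Ropp _ _ _ H1).
  apply (filterlim_opp (V:=R_NormedModule) a).
Qed.
Lemma R_minus_lim {T} (F : (T -> Prop) -> Prop) {FF : Filter F} (u v : T -> R) a b :
  filterlim u F (locally a) -> filterlim v F (locally b) ->
  filterlim (fun x => u x - v x) F (locally (a - b)).
Proof.
  intros H1 H2. apply (R_plus_lim F); auto. apply (R_opp_lim F); auto.
Qed.

Lemma C_mult_lim {T} (F : (T -> Prop) -> Prop) {FF : Filter F} (u v : T -> C) a b :
  filterlim u F (locally a) -> filterlim v F (locally b) ->
  filterlim (fun x => Cmult (u x) (v x)) F (locally (Cmult a b)).
Proof.
  intros H1 H2. destruct a as [a1 a2]. destruct b as [b1 b2].
  pose proof (C_fst_lim F u _ H1) as U1. pose proof (C_snd_lim F u _ H1) as U2.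
  pose proof (C_fst_lim F v _ H2) as V1. pose proof (C_snd_lim F v _ H2) as V2.
  simpl in U1, U2, V1, V2.
  apply (C_pair_lim F); simpl.
  - apply (R_minus_lim F); apply (R_mult_lim F); assumption.
  - apply (R_plus_lim F); apply (R_mult_lim F); assumption.
Qed.
Lemma C_minus_lim {T} (F : (T -> Prop) -> Prop) {FF : Filter F} (u v : T -> C) a b :
  filterlim u F (locally a) -> filterlim v F (locally b) ->
  filterlim (fun x => Cminus (u x) (v x)) F (locally (Cminus a b)).
Proof.
  intros H1 H2. destruct a as [a1 a2]. destruct b as [b1 b2].
  pose proof (C_fst_lim F u _ H1) as U1. pose proof (C_snd_lim F u _ H1) as U2.
  pose proof (C_fst_lim F v _ H2) as V1. pose proof (C_snd_lim F v _ H2) as V2.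
  simpl in U1, U2, V1, V2.
  apply (C_pair_lim F); simpl.
  - apply (R_minus_lim F); assumption.
  - apply (R_minus_lim F); assumption.
Qed.
Lemma C_mod_lim {T} (F : (T -> Prop) -> Prop) {FF : Filter F} (u : T -> C) a :
  filterlim u F (locally a) -> filterlim (fun x => Cmod (u x)) F (locally (Cmod a)).
Proof.
  intros H. apply (filterlim_comp _ _ _ u Cmod _ _ _ H).
  apply (filterlim_norm (V:=C_NormedModule) a).
Qed.

Lemma PWC_comp2' {U V W : UniformSpace} (g : R -> U) (h : R -> V) (F : U -> V -> W) :
  PWC g -> PWC h ->
  (forall u v, filterlim (fun p : U * V => F (fst p) (snd p))
      (filter_prod (locally u) (locally v)) (locally (F u v))) ->
  PWC (fun x => F (g x) (h x)).
Proof.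
  intros [Hl Hlim] [Hl' Hlim'] HF. split.
  - intros a b. destruct (Hl a b) as [l Hc]. destruct (Hl' a b) as [l' Hc'].
    exists (l ++ l'). intros x Hx Hn.
    unfold continuous. apply (filterlim_comp_2 (G:=locally (g x)) (H:=locally (h x)) g h F).
    + apply Hc; [assumption|]. intros Hi; apply Hn, in_or_app; auto.
    + apply Hc'; [assumption|]. intros Hi; apply Hn, in_or_app; auto.
    + apply HF.
  - intros x. destruct (Hlim x) as [[L1 H1] [L2 H2]]. destruct (Hlim' x) as [[M1 K1] [M2 K2]]. split.
    + exists (F L1 M1). apply (filterlim_comp_2 (G:=locally L1) (H:=locally M1) g h F); auto.
    + exists (F L2 M2). apply (filterlim_comp_2 (G:=locally L2) (H:=locally M2) g h F); auto.
Qed.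

Lemma PWC_cont {V : UniformSpace} (h : R -> V) : (forall x, continuous h x) -> PWC h.
Proof.
  intros Hh. split.
  - intros a b. exists nil. intros x _ _. apply Hh.
  - intros x. split.
    + exists (h x). eapply filterlim_filter_le_1; [|apply Hh].
      intros P HP. unfold at_right, within. apply filter_imp with P; auto.
    + exists (h x). eapply filterlim_filter_le_1; [|apply Hh].
      intros P HP. unfold at_left, within. apply filter_imp with P; auto.
Qed.

Lemma lim_fst {U V : Type} (F : (U -> Prop) -> Prop) (G : (V -> Prop) -> Prop) {FF : Filter F} {FG : Filter G} :
  filterlim (fun p : U * V => fst p) (filter_prod F G) F.
Proof.
  intros P HP. exists P (fun _ => True); auto. apply filter_true.
Qed.
Lemma lim_snd {U V : Type} (F : (U -> Prop) -> Prop) (G : (V -> Prop) -> Prop) {FF : Filter F} {FG : Filter G} :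
  filterlim (fun p : U * V => snd p) (filter_prod F G) G.
Proof.
  intros P HP. exists (fun _ => True) P; auto. apply filter_true.
Qed.

Lemma HF_Cmult (u v : C) : filterlim (fun p : C * C => Cmult (fst p) (snd p))
   (filter_prod (locally u) (locally v)) (locally (Cmult u v)).
Proof. apply (C_mult_lim (filter_prod (locally u) (locally v))); [apply lim_fst | apply lim_snd]; apply locally_filter. Qed.
Lemma HF_Rmult (u v : R) : filterlim (fun p : R * R => Rmult (fst p) (snd p))
   (filter_prod (locally u) (locally v)) (locally (Rmult u v)).
Proof. apply (R_mult_lim (filter_prod (locally u) (locally v))); [apply lim_fst | apply lim_snd]; apply locally_filter. Qed.
Lemma HF_Rplus (u v : R) : filterlim (fun p : R * R => Rplus (fst p) (snd p))
   (filter_prod (locally u) (locally v)) (locally (Rplus u v)).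
Proof. apply (R_plus_lim (filter_prod (locally u) (locally v))); [apply lim_fst | apply lim_snd]; apply locally_filter. Qed.
Lemma HF_Cmodminus (u v : C) : filterlim (fun p : C * C => Cmod (Cminus (fst p) (snd p)))
   (filter_prod (locally u) (locally v)) (locally (Cmod (Cminus u v))).
Proof. apply (C_mod_lim (filter_prod (locally u) (locally v))), (C_minus_lim (filter_prod (locally u) (locally v))); [apply lim_fst | apply lim_snd]; apply locally_filter. Qed.

Lemma phi_cont (phi : R -> C) : Schwartz phi -> forall x, continuous phi x.
Proof.
  intros [D [HD0 [HD _]]] x. subst phi.
  apply (ex_derive_continuous (V:=prod_NormedModule R_AbsRing R_NormedModule R_NormedModule)).
  eexists. apply HD.
Qed.

Lemma ball0_Cmod (z : C) : ball (RtoC 0) 1 z -> Cmod z <= 2.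
Proof.
  intros H. apply C_NormedModule_mixin_compat2 with (eps := mkposreal 1 Rlt_0_1) in H.
  simpl in H. assert (H' : Cmod z < sqrt 2 * 1).
  { eapply Rle_lt_trans; [|exact H]. right. f_equal. destruct z as [z1 z2].
    unfold minus, plus, opp; simpl. unfold Cplus, Copp; simpl. f_equal; ring. }
  assert (sqrt 2 < 2).
  { assert (sqrt 2 < sqrt (2*2)) by (apply sqrt_lt_1; lra). rewrite sqrt_square in H0 by lra. exact H0. }
  lra.
Qed.

Lemma phi_tail (phi : R -> C) (m : nat) : Schwartz phi ->
  exists Y, 1 <= Y /\ forall y, Y <= Rabs y -> Rabs (y ^ m) * Cmod (phi y) <= 2.
Proof.
  intros [D [HD0 [_ HL]]]. destruct (HL m 0%nat) as [Hp Hm]. rewrite HD0 in Hp, Hm.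
  pose proof (proj1 (filterlim_locally _ _) Hp (mkposreal 1 Rlt_0_1)) as [M1 H1].
  pose proof (proj1 (filterlim_locally _ _) Hm (mkposreal 1 Rlt_0_1)) as [M2 H2].
  exists (Rmax 1 (Rmax (M1 + 1) (- M2 + 1))). split. apply Rmax_l.
  intros y Hy.
  assert (E : forall z, ball (RtoC 0) 1 (Cmult (RtoC (z ^ m)) (phi z)) -> Rabs (z ^ m) * Cmod (phi z) <= 2).
  { intros z Hz. apply ball0_Cmod in Hz. rewrite Cmod_mult, Cmod_R in Hz. exact Hz. }
  pose proof (Rmax_l 1 (Rmax (M1 + 1) (- M2 + 1))).
  pose proof (Rmax_r 1 (Rmax (M1 + 1) (- M2 + 1))).
  pose proof (Rmax_l (M1 + 1) (- M2 + 1)). pose proof (Rmax_r (M1 + 1) (- M2 + 1)).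
  destruct (Rle_dec 0 y).
  - rewrite Rabs_pos_eq in Hy by lra. apply E, H1. lra.
  - rewrite Rabs_left in Hy by lra. apply E, H2. lra.
Qed.

Lemma phi_decay (phi : R -> C) (p : nat) : Schwartz phi ->
  exists Q, 0 < Q /\ forall y, Cmod (phi y) <= Q / (1 + y ^ 2) ^ p.
Proof.
  intros HS. destruct (phi_tail phi (2 * p) HS) as [Y [HY1 HY]].
  assert (Hc : forall x, -Y <= x <= Y -> filterlim phi (locally x) (locally (phi x))).
  { intros x _. apply (phi_cont phi HS x). }
  destruct (bounded_continuity (V:=C_NormedModule) phi (-Y) Y Hc) as [M HM].
  assert (HM0 : 0 < M). { specialize (HM 0 ltac:(lra)). pose proof (Cmod_ge_0 (phi 0)). change (Cmod (phi 0) < M) in HM. lra. }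
  exists (2 * 2 ^ p + M * (1 + Y ^ 2) ^ p). split.
  { pose proof (pow_lt 2 p ltac:(lra)). pose proof (pow_le (1 + Y^2) p ltac:(nra)). pose proof (Rmult_le_pos M ((1+Y^2)^p) ltac:(lra) H0). lra. }
  intros y. assert (Hpos : 0 < (1 + y ^ 2) ^ p) by (apply pow_lt; nra).
  apply Rmult_le_reg_r with ((1 + y ^ 2) ^ p); [exact Hpos|].
  unfold Rdiv. rewrite Rmult_assoc, Rinv_l, Rmult_1_r by lra.
  pose proof (pow_le 2 p ltac:(lra)). pose proof (pow_le (1 + Y^2) p ltac:(nra)).
  pose proof (Cmod_ge_0 (phi y)).
  destruct (Rle_dec Y (Rabs y)) as [Hy|Hy].
  - specialize (HY y Hy). rewrite pow_mult in HY.
    rewrite Rabs_pos_eq in HY by (apply pow_le; nra).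
    assert (K : (1 + y ^ 2) ^ p <= 2 ^ p * (y ^ 2) ^ p).
    { rewrite <- Rpow_mult_distr. apply pow_incr. split. nra.
      assert (1 <= y ^ 2). { assert (1 <= Rabs y) by lra. unfold Rabs in *; destruct (Rcase_abs y); nra. }
      lra. }
    assert (Cmod (phi y) * (1 + y ^ 2) ^ p <= Cmod (phi y) * (2 ^ p * (y ^ 2) ^ p)) by (apply Rmult_le_compat_l; lra).
    assert (0 <= M * (1 + Y ^ 2) ^ p) by nra.
    nra.
  - assert (Hy' : -Y <= y <= Y) by (unfold Rabs in Hy; destruct (Rcase_abs y); lra).
    specialize (HM y Hy'). change (Cmod (phi y) < M) in HM.
    assert (K : (1 + y ^ 2) ^ p <= (1 + Y ^ 2) ^ p).
    { apply pow_incr. split. nra. unfold Rabs in Hy; destruct (Rcase_abs y); nra. }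
    assert (Cmod (phi y) * (1 + y ^ 2) ^ p <= M * (1 + Y ^ 2) ^ p).
    { apply Rmult_le_compat; lra. }
    pose proof (pow_le 2 p ltac:(lra)). nra.
Qed.
Notation RIntC g a b := (@RInt C_R_CompleteNormedModule g a b).

Lemma norm_C (z : C) : @norm _ C_R_NormedModule z = Cmod z.
Proof. change (sqrt (Rabs (fst z) ^ 2 + Rabs (snd z) ^ 2) = Cmod z).
  unfold Cmod. rewrite !pow2_abs. reflexivity. Qed.
Lemma norm_C_le (z : C) : @norm _ C_R_NormedModule z <= Cmod z.
Proof. rewrite norm_C; lra. Qed.
Lemma Cmod_le_norm (z : C) : Cmod z <= 2 * @norm _ C_R_NormedModule z.
Proof. rewrite norm_C. pose proof (Cmod_ge_0 z). lra. Qed.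

Lemma norm_RInt_bound (g : R -> C) (h : R -> R) u v :
  ex_RInt g u v -> ex_RInt h u v -> u <= v -> (forall x, u <= x <= v -> Cmod (g x) <= h x) ->
  Cmod (RIntC g u v) <= 2 * RInt h u v.
Proof.
  intros Hg Hh Huv Hb.
  eapply Rle_trans; [apply Cmod_le_norm|]. apply Rmult_le_compat_l; [lra|].
  apply (norm_RInt_le (V:=C_R_NormedModule) g h u v _ _ Huv).
  - intros x Hx. eapply Rle_trans; [apply norm_C_le|]. auto.
  - exact (RInt_correct (V:=C_R_CompleteNormedModule) _ _ _ Hg).
  - exact (RInt_correct _ _ _ Hh).
Qed.

Lemma gen_exists (g : R -> C) (h : R -> R) :
  (forall a b, ex_RInt g a b) -> (forall a b, ex_RInt h a b) ->
  (forall x, Cmod (g x) <= h x) ->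
  (forall eps, 0 < eps -> exists T, forall u v, T <= u -> u <= v -> RInt h u v <= eps) ->
  (forall eps, 0 < eps -> exists T, forall u v, u <= v -> v <= - T -> RInt h u v <= eps) ->
  exists l, is_RInt_gen g (Rbar_locally m_infty) (Rbar_locally p_infty) l.
Proof.
  intros Hg Hh Hb Hr Hl.
  assert (Bd : forall u v, u <= v -> Cmod (RIntC g u v) <= 2 * RInt h u v).
  { intros u v Huv. apply norm_RInt_bound; auto. }
  assert (Bs : forall u v, Cmod (RIntC g u v) = Cmod (RIntC g v u)).
  { intros u v. rewrite <- (opp_RInt_swap (V:=C_R_CompleteNormedModule) g v u) by auto.
    destruct (RIntC g v u) as [p q]. change (Cmod (Copp (p, q)) = Cmod (p, q)). apply Cmod_opp. }
  assert (Cauchy : forall eps : posreal, exists P, filter_prod (Rbar_locally m_infty) (Rbar_locally p_infty) P /\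
     forall u v, P u -> P v -> ball (RIntC g (fst u) (snd u)) eps (RIntC g (fst v) (snd v))).
  { intros eps. destruct (Hr (eps / 6) ltac:(destruct eps; simpl; lra)) as [T1 H1].
    destruct (Hl (eps / 6) ltac:(destruct eps; simpl; lra)) as [T2 H2].
    exists (fun ab => fst ab < - T2 /\ T1 < snd ab). split.
    - exists (fun a => a < - T2) (fun b => T1 < b).
      + exists (- T2). auto.
      + exists T1. auto.
      + intros x y Hx Hy. simpl. auto.
    - intros [a b] [a' b'] [Ha Hb'] [Ha' Hb'']. simpl in *.
      apply C_NormedModule_mixin_compat1.
      assert (E1 : RIntC g a' b' = Cplus (RIntC g a' a) (Cplus (RIntC g a b) (RIntC g b b'))).
      { rewrite <- (RInt_Chasles (V:=C_R_CompleteNormedModule) g a' a b') by auto. rewrite <- (RInt_Chasles (V:=C_R_CompleteNormedModule) g a b b') by auto. reflexivity. }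
      assert (K1 : Cmod (RIntC g a' a) <= 2 * (eps / 6)).
      { destruct (Rle_dec a' a).
        - eapply Rle_trans; [apply Bd; auto|]. apply Rmult_le_compat_l; [lra|]; apply H2; lra.
        - rewrite Bs. eapply Rle_trans; [apply Bd; lra|]. apply Rmult_le_compat_l; [lra|]; apply H2; lra. }
      assert (K2 : Cmod (RIntC g b b') <= 2 * (eps / 6)).
      { destruct (Rle_dec b b').
        - eapply Rle_trans; [apply Bd; auto|]. apply Rmult_le_compat_l; [lra|]; apply H1; lra.
        - rewrite Bs. eapply Rle_trans; [apply Bd; lra|]. apply Rmult_le_compat_l; [lra|]; apply H1; lra. }
      rewrite E1.
      assert (E2 : minus (Cplus (RIntC g a' a) (Cplus (RIntC g a b) (RIntC g b b'))) (RIntC g a b)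
                   = Cplus (RIntC g a' a) (RIntC g b b')).
      { destruct (RIntC g a' a), (RIntC g a b), (RIntC g b b'). unfold minus, plus, opp; simpl.
        unfold Cplus, Copp; simpl. f_equal; ring. }
      rewrite E2. eapply Rle_lt_trans; [apply Cmod_triangle|]. destruct eps; simpl in *; lra. }
  destruct (proj1 (filterlim_locally_cauchy (F := filter_prod (Rbar_locally m_infty) (Rbar_locally p_infty))
     (fun ab : R * R => RIntC g (fst ab) (snd ab) : C_R_CompleteNormedModule)) Cauchy) as [l Hlim].
  exists l. unfold is_RInt_gen, filterlimi, filter_le, filtermapi. intros P HP. specialize (Hlim P HP). unfold filtermap in Hlim.
  generalize Hlim. apply filter_imp. intros [a b] HPab. exists (RIntC g a b). split; auto.
  apply (RInt_correct (V:=C_R_CompleteNormedModule)); auto.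
Qed.

Lemma nat_above (z : R) : exists n : nat, z <= INR n.
Proof.
  destruct (archimed z) as [H _].
  destruct (Z_le_gt_dec 0 (up z)) as [Hz|Hz].
  - exists (Z.to_nat (up z)). rewrite INR_IZR_INZ, Z2Nat.id by exact Hz. lra.
  - exists 0%nat. simpl. apply Z.gt_lt in Hz. apply IZR_lt in Hz. lra.
Qed.

Lemma RInt_mono_dom (w : R -> R) s u v t :
  (forall x, 0 <= w x) -> (forall a b, ex_RInt w a b) ->
  s <= u -> u <= v -> v <= t -> RInt w u v <= RInt w s t.
Proof.
  intros Hw He H1 H2 H3.
  rewrite <- (RInt_Chasles w s u t) by auto.
  rewrite <- (RInt_Chasles w u v t) by auto.
  assert (0 <= RInt w s u) by (apply RInt_ge_0; auto).
  assert (0 <= RInt w v t) by (apply RInt_ge_0; auto).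
  unfold plus; simpl. lra.
Qed.

Section Weight.
Variables (a : R -> R) (C0 : R) (N : nat) (c : R).
Hypothesis Ha0 : forall x, 0 <= a x.
Hypothesis Hae : forall u v, ex_RInt a u v.
Hypothesis HC0 : 0 < C0.
Hypothesis Hgr : forall r, 0 < r -> RInt a (- r) r <= C0 * (1 + r) ^ N.

Definition wt (x : R) := / (1 + (x - c) ^ 2) ^ (N + 2).
Definition aw (x : R) := a x * wt x.
Hypothesis Hawe : forall u v, ex_RInt aw u v.

Lemma wt_pos x : 0 < wt x.
Proof. unfold wt. apply Rinv_0_lt_compat, pow_lt. pose proof (pow2_ge_0 (x - c)). lra. Qed.

Lemma aw_nonneg x : 0 <= aw x.
Proof. unfold aw. pose proof (wt_pos x). pose proof (Ha0 x). nra. Qed.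

Lemma wt_bound (n x : R) : 2 * Rabs c <= n -> n <= Rabs x ->
  wt x <= / ((1 + n ^ 2) / 4) ^ (N + 2).
Proof.
  intros H1 H2. unfold wt. apply Rinv_le_contravar.
  - apply pow_lt. pose proof (Rabs_pos c). nra.
  - apply pow_incr. split. pose proof (Rabs_pos c). nra.
    pose proof (Rabs_triang_inv x c). pose proof (Rabs_pos c).
    assert (n / 2 <= Rabs (x - c)) by lra.
    assert ((x - c) ^ 2 = Rabs (x - c) ^ 2) by (rewrite pow2_abs; reflexivity).
    assert (0 <= n) by lra. nra.
Qed.

Definition Kw := C0 * 8 ^ (N + 2).

Lemma shell (n : nat) (s : R) : 2 * Rabs c <= INR n ->
  - (INR n + 1) <= s -> s + 1 <= INR n + 1 ->
  (forall x, s <= x <= s + 1 -> INR n <= Rabs x) ->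
  RInt aw s (s + 1) <= Kw * (/ (INR n + 1) - / (INR n + 2)).
Proof.
  intros Hn Hs1 Hs2 Hx.
  set (q := (1 + INR n ^ 2) / 4).
  assert (Hq : 0 < q) by (unfold q; pose proof (pos_INR n); nra).
  set (B := / q ^ (N + 2)).
  assert (HB : 0 < B) by (apply Rinv_0_lt_compat, pow_lt, Hq).
  assert (I1 : RInt aw s (s + 1) <= RInt (fun x => B * a x) s (s + 1)).
  { apply RInt_le; [lra| apply Hawe | |].
    - apply (ex_RInt_scal (V:=R_NormedModule) a). apply Hae.
    - intros x Hx'. unfold aw. rewrite Rmult_comm. apply Rmult_le_compat_r; [apply Ha0|].
      apply wt_bound; [exact Hn|]. apply Hx; lra. }
  assert (I2 : RInt (fun x => B * a x) s (s + 1) = B * RInt a s (s + 1)).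
  { apply (RInt_scal (V:=R_CompleteNormedModule) a). apply Hae. }
  assert (I3 : RInt a s (s + 1) <= C0 * (INR n + 2) ^ N).
  { eapply Rle_trans. apply (RInt_mono_dom a (- (INR n + 1)) s (s+1) (INR n + 1)); auto; lra.
    replace (INR n + 2) with (1 + (INR n + 1)) by ring. apply Hgr. pose proof (pos_INR n); lra. }
  assert (I4 : C0 * (INR n + 2) ^ N * B <= Kw * (/ (INR n + 1) - / (INR n + 2))).
  { pose proof (pos_INR n) as Hn0.
    replace (/ (INR n + 1) - / (INR n + 2)) with (/ ((INR n + 1) * (INR n + 2))) by (field; lra).
    unfold B, Kw.
    assert (P1 : (INR n + 2) ^ N * ((INR n + 1) * (INR n + 2)) <= (INR n + 2) ^ (N + 2)).
    { rewrite pow_add. apply Rmult_le_compat_l. apply pow_le; lra. simpl. nra. }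
    assert (P2 : (INR n + 2) ^ (N + 2) <= 8 ^ (N + 2) * q ^ (N + 2)).
    { rewrite <- Rpow_mult_distr. apply pow_incr. unfold q. split; [lra|].
      assert (INR n = 0 \/ 1 <= INR n) as [E|E] by (destruct n; [left; reflexivity| right; rewrite S_INR; pose proof (pos_INR n); lra]).
      - rewrite E. lra.
      - nra. }
    assert (Hqp : 0 < q ^ (N + 2)) by (apply pow_lt; lra).
    assert (Hnn : 0 < (INR n + 1) * (INR n + 2)) by nra.
    apply Rmult_le_reg_r with (q ^ (N + 2) * ((INR n + 1) * (INR n + 2))).
    { apply Rmult_lt_0_compat; lra. }
    replace (C0 * (INR n + 2) ^ N * / q ^ (N + 2) * (q ^ (N + 2) * ((INR n + 1) * (INR n + 2))))
      with (C0 * ((INR n + 2) ^ N * ((INR n + 1) * (INR n + 2)))) by (field; lra).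
    replace (C0 * 8 ^ (N + 2) * / ((INR n + 1) * (INR n + 2)) * (q ^ (N + 2) * ((INR n + 1) * (INR n + 2))))
      with (C0 * (8 ^ (N + 2) * q ^ (N + 2))) by (field; lra).
    apply Rmult_le_compat_l; lra. }
  assert (0 <= RInt a s (s+1)) by (apply RInt_ge_0; [lra|apply Hae|intros; apply Ha0]).
  rewrite I2 in I1. 
  assert (B * RInt a s (s + 1) <= B * (C0 * (INR n + 2) ^ N)) by (apply Rmult_le_compat_l; lra).
  lra.
Qed.

Lemma sum_right (n0 : nat) : 2 * Rabs c <= INR n0 -> forall j : nat,
  RInt aw (INR n0) (INR n0 + INR j) <= Kw * (/ (INR n0 + 1) - / (INR n0 + INR j + 1)).
Proof.
  intros Hn0 j. induction j as [|j IH].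
  - change (INR 0) with 0. rewrite !Rplus_0_r, RInt_point. change (@zero R_AbelianGroup) with 0.
    rewrite Rminus_diag, Rmult_0_r. right; reflexivity.
  - rewrite S_INR. pose proof (pos_INR n0). pose proof (pos_INR j).
    rewrite <- (RInt_Chasles aw (INR n0) (INR n0 + INR j) (INR n0 + (INR j + 1))) by auto.
    change (plus ?x ?y) with (x + y).
    assert (Sh := shell (n0 + j) (INR n0 + INR j)).
    rewrite plus_INR in Sh.
    assert (Sh' : RInt aw (INR n0 + INR j) (INR n0 + INR j + 1) <= Kw * (/ (INR n0 + INR j + 1) - / (INR n0 + INR j + 2))).
    { apply Sh; try lra. intros x Hx. rewrite Rabs_pos_eq; lra. }
    replace (INR n0 + (INR j + 1)) with (INR n0 + INR j + 1) by ring.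
    replace (INR n0 + INR j + 1 + 1) with (INR n0 + INR j + 2) by ring.
    unfold plus in *; simpl in *. lra.
Qed.

Lemma sum_left (n0 : nat) : 2 * Rabs c <= INR n0 -> forall j : nat,
  RInt aw (- (INR n0 + INR j)) (- INR n0) <= Kw * (/ (INR n0 + 1) - / (INR n0 + INR j + 1)).
Proof.
  intros Hn0 j. induction j as [|j IH].
  - change (INR 0) with 0. rewrite !Rplus_0_r, RInt_point. change (@zero R_AbelianGroup) with 0.
    rewrite Rminus_diag, Rmult_0_r. right; reflexivity.
  - rewrite S_INR. pose proof (pos_INR n0). pose proof (pos_INR j).
    rewrite <- (RInt_Chasles aw (- (INR n0 + (INR j + 1))) (- (INR n0 + INR j)) (- INR n0)) by auto.
    assert (Sh := shell (n0 + j) (- (INR n0 + INR j + 1))).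
    rewrite plus_INR in Sh.
    assert (Sh' : RInt aw (- (INR n0 + INR j + 1)) (- (INR n0 + INR j + 1) + 1) <= Kw * (/ (INR n0 + INR j + 1) - / (INR n0 + INR j + 2))).
    { apply Sh; try lra. intros x Hx. rewrite Rabs_left1; lra. }
    replace (- (INR n0 + INR j + 1) + 1) with (- (INR n0 + INR j)) in Sh' by ring.
    replace (INR n0 + (INR j + 1)) with (INR n0 + INR j + 1) by ring.
    replace (INR n0 + INR j + 1 + 1) with (INR n0 + INR j + 2) by ring.
    unfold plus in *; simpl in *. lra.
Qed.

Lemma n0_choice (eps : R) : 0 < eps -> exists n0 : nat,
  2 * Rabs c <= INR n0 /\ Kw * / (INR n0 + 1) <= eps.
Proof.
  intros He. destruct (nat_above (Rmax (2 * Rabs c) (Kw / eps))) as [n0 Hn0].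
  exists n0. pose proof (Rmax_l (2 * Rabs c) (Kw / eps)). pose proof (Rmax_r (2 * Rabs c) (Kw / eps)).
  split; [lra|]. pose proof (pos_INR n0).
  assert (HK : 0 < Kw) by (unfold Kw; apply Rmult_lt_0_compat; [lra|apply pow_lt; lra]).
  apply Rmult_le_reg_r with (INR n0 + 1); [lra|].
  rewrite Rmult_assoc, Rinv_l, Rmult_1_r by lra.
  assert (Kw <= eps * INR n0).
  { apply Rmult_le_reg_r with (/ eps). apply Rinv_0_lt_compat; lra.
    replace (eps * INR n0 * / eps) with (INR n0) by (field; lra). unfold Rdiv in *. lra. }
  lra.
Qed.

Lemma tail_right eps : 0 < eps -> exists T, forall u v, T <= u -> u <= v -> RInt aw u v <= eps.
Proof.
  intros He. destruct (n0_choice eps He) as [n0 [H1 H2]].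
  exists (INR n0). intros u v Hu Hv.
  destruct (nat_above (v - INR n0)) as [j Hj].
  eapply Rle_trans. apply (RInt_mono_dom aw (INR n0) u v (INR n0 + INR j)); auto; try lra. apply aw_nonneg.
  eapply Rle_trans. apply sum_right; auto.
  pose proof (pos_INR n0). pose proof (pos_INR j).
  assert (0 < / (INR n0 + INR j + 1)) by (apply Rinv_0_lt_compat; lra).
  assert (HK : 0 < Kw) by (unfold Kw; apply Rmult_lt_0_compat; [lra|apply pow_lt; lra]).
  nra.
Qed.

Lemma tail_left eps : 0 < eps -> exists T, forall u v, u <= v -> v <= - T -> RInt aw u v <= eps.
Proof.
  intros He. destruct (n0_choice eps He) as [n0 [H1 H2]].
  exists (INR n0). intros u v Hu Hv.
  destruct (nat_above (- u - INR n0)) as [j Hj].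
  eapply Rle_trans. apply (RInt_mono_dom aw (- (INR n0 + INR j)) u v (- INR n0)); auto; try lra. apply aw_nonneg.
  eapply Rle_trans. apply sum_left; auto.
  pose proof (pos_INR n0). pose proof (pos_INR j).
  assert (0 < / (INR n0 + INR j + 1)) by (apply Rinv_0_lt_compat; lra).
  assert (HK : 0 < Kw) by (unfold Kw; apply Rmult_lt_0_compat; [lra|apply pow_lt; lra]).
  nra.
Qed.

Lemma aw_total : exists K, forall u v, u <= v -> RInt aw u v <= K.
Proof.
  destruct (tail_right 1 Rlt_0_1) as [T1 H1]. destruct (tail_left 1 Rlt_0_1) as [T2 H2].
  set (M := Rmax (Rabs T1) (Rabs T2)).
  assert (M1 : T1 <= M) by (unfold M; eapply Rle_trans; [apply Rle_abs|apply Rmax_l]).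
  assert (M2 : T2 <= M) by (unfold M; eapply Rle_trans; [apply Rle_abs|apply Rmax_r]).
  exists (2 + RInt aw (- M) M). intros u v Huv.
  assert (M0 : 0 <= M) by (unfold M; eapply Rle_trans; [apply Rabs_pos|apply Rmax_l]).
  eapply Rle_trans. apply (RInt_mono_dom aw (Rmin u (- M)) u v (Rmax v M)); auto.
  apply aw_nonneg. apply Rmin_l. apply Rmax_l.
  rewrite <- (RInt_Chasles aw (Rmin u (- M)) (- M) (Rmax v M)) by auto.
  rewrite <- (RInt_Chasles aw (- M) M (Rmax v M)) by auto.
  assert (RInt aw (Rmin u (- M)) (- M) <= 1) by (apply H2; [apply Rmin_r|lra]).
  assert (RInt aw M (Rmax v M) <= 1) by (apply H1; [lra|apply Rmax_r]).
  unfold plus; simpl. lra.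
Qed.

End Weight.

Lemma PWC_ext {V : UniformSpace} (g g' : R -> V) : (forall x, g x = g' x) -> PWC g -> PWC g'.
Proof. intros E H. replace g' with g by (apply functional_extensionality; exact E). exact H. Qed.

Lemma cont_wt N c x : continuous (wt N c) x.
Proof.
  apply (ex_derive_continuous (V:=R_NormedModule)). unfold wt.
  auto_derive. apply pow_nonzero. pose proof (pow2_ge_0 (x - c)). lra.
Qed.

Lemma cont_affine k c x : continuous (fun y => k * (y - c)) x.
Proof. apply (ex_derive_continuous (V:=R_NormedModule)). auto_derive. exact I. Qed.

Lemma phikc_cont (phi : R -> C) k c : Schwartz phi -> forall x, continuous (phi_kc phi k c) x.
Proof.
  intros HS x. unfold phi_kc, continuous.
  apply (C_mult_lim (locally x) (fun _ => RtoC (INR k)) (fun y => phi (INR k * (y - c)))).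
  - apply filterlim_const.
  - apply (continuous_comp (fun y => INR k * (y - c)) phi). apply cont_affine. apply phi_cont, HS.
Qed.

Lemma RInt_even (phi : R -> C) : (forall x, phi (- x) = phi x) -> (forall a b, ex_RInt phi a b) ->
  forall b, RIntC phi (- b) 0 = RIntC phi 0 b.
Proof.
  intros Hev Hex b.
  assert (H1 : is_RInt (fun y => opp (phi y)) 0 b (RIntC phi (- 0) (- b))).
  { eapply is_RInt_ext; [|apply (is_RInt_comp_opp phi 0 b)].
    - intros x _. simpl. rewrite Hev. reflexivity.
    - apply (RInt_correct (V:=C_R_CompleteNormedModule)), Hex. }
  assert (H2 : is_RInt (fun y => opp (phi y)) 0 b (opp (RIntC phi 0 b))).
  { apply (is_RInt_opp (V:=C_R_NormedModule)). apply (RInt_correct (V:=C_R_CompleteNormedModule)), Hex. }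
  apply (is_RInt_unique (V:=C_R_CompleteNormedModule)) in H1.
  apply (is_RInt_unique (V:=C_R_CompleteNormedModule)) in H2.
  rewrite Ropp_0 in H1. rewrite H1 in H2.
  rewrite <- (opp_RInt_swap (V:=C_R_CompleteNormedModule) phi 0 (- b)) by apply Hex.
  rewrite H2. apply (opp_opp (G:=C_R_CompleteNormedModule)).
Qed.

Lemma whole_lim (phi : R -> C) (l : C) :
  is_RInt_gen phi (Rbar_locally m_infty) (Rbar_locally p_infty) l ->
  (forall a b, ex_RInt phi a b) ->
  filterlim (fun b => RIntC phi (- b) b) (Rbar_locally p_infty) (locally l).
Proof.
  intros H Hex P HP. specialize (H P HP). destruct H as [Q R' [M1 HQ] [M2 HR] HQR].
  exists (Rmax (- M1) M2). intros b Hb.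
  pose proof (Rmax_l (- M1) M2). pose proof (Rmax_r (- M1) M2).
  destruct (HQR (- b) b) as [y [Hy HPy]]. apply HQ; lra. apply HR; lra.
  simpl in Hy. apply (is_RInt_unique (V:=C_R_CompleteNormedModule)) in Hy.
  simpl. rewrite Hy. exact HPy.
Qed.

Lemma half_lim (phi : R -> C) :
  (forall x, phi (- x) = phi x) -> (forall a b, ex_RInt phi a b) ->
  is_RInt_gen phi (Rbar_locally m_infty) (Rbar_locally p_infty) (RtoC 1) ->
  filterlim (fun b => RIntC phi 0 b) (Rbar_locally p_infty) (locally (RtoC (/ 2))).
Proof.
  intros Hev Hex H.
  apply filterlim_ext with (fun b => Cmult (RtoC (/ 2)) (RIntC phi (- b) b)).
  - intros b. rewrite <- (RInt_Chasles (V:=C_R_CompleteNormedModule) phi (- b) 0 b) by apply Hex.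
    rewrite (RInt_even phi Hev Hex b).
    destruct (RIntC phi 0 b) as [x1 x2]. change (plus (x1, x2) (x1, x2)) with (Cplus (x1,x2) (x1,x2)).
    unfold Cmult, Cplus; simpl. f_equal; field.
  - assert (L := C_mult_lim (Rbar_locally p_infty) (fun _ => RtoC (/ 2)) (fun b => RIntC phi (- b) b)
       (RtoC (/ 2)) (RtoC 1) (filterlim_const _) (whole_lim phi (RtoC 1) H Hex)).
    replace (Cmult (RtoC (/ 2)) (RtoC 1)) with (RtoC (/ 2)) in L. exact L.
    unfold Cmult, RtoC; simpl. f_equal; ring.
Qed.

Lemma phik_right (phi : R -> C) (Hex : forall a b, ex_RInt phi a b) (k : nat) c b :
  RIntC (phi_kc phi k c) c b = RIntC phi 0 (INR k * (b - c)).
Proof.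
  assert (E := RInt_comp_lin (V:=C_R_CompleteNormedModule) phi (INR k) (- (INR k) * c) c b (Hex _ _)).
  replace (INR k * c + - INR k * c) with 0 in E by ring.
  replace (INR k * b + - INR k * c) with (INR k * (b - c)) in E by ring.
  rewrite <- E. apply RInt_ext. intros x _. unfold phi_kc.
  rewrite scal_R_Cmult. f_equal. f_equal. ring.
Qed.

Lemma phik_left (phi : R -> C) (Hev : forall x, phi (- x) = phi x) (Hex : forall a b, ex_RInt phi a b) (k : nat) c a :
  RIntC (phi_kc phi k c) a c = RIntC phi 0 (INR k * (c - a)).
Proof.
  assert (E := RInt_comp_lin (V:=C_R_CompleteNormedModule) phi (INR k) (- (INR k) * c) a c (Hex _ _)).
  replace (INR k * c + - INR k * c) with 0 in E by ring.
  replace (INR k * a + - INR k * c) with (- (INR k * (c - a))) in E by ring.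
  rewrite (RInt_even phi Hev Hex) in E.
  rewrite <- E. apply RInt_ext. intros x _. unfold phi_kc.
  rewrite scal_R_Cmult. f_equal. f_equal. ring.
Qed.

Lemma phik_right_lim (phi : R -> C) (Hev : forall x, phi (- x) = phi x) (Hex : forall a b, ex_RInt phi a b)
  (H1 : is_RInt_gen phi (Rbar_locally m_infty) (Rbar_locally p_infty) (RtoC 1)) (k : nat) c :
  0 < INR k -> filterlim (fun b => RIntC (phi_kc phi k c) c b) (Rbar_locally p_infty) (locally (RtoC (/ 2))).
Proof.
  intros Hk. apply filterlim_ext with (fun b => RIntC phi 0 (INR k * (b - c))).
  { intros b. symmetry. apply phik_right; auto. }
  apply (filterlim_comp _ _ _ (fun b => INR k * (b - c)) (fun y => RIntC phi 0 y) _ (Rbar_locally p_infty)).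
  - intros P [M HM]. exists (c + Rabs M / INR k). intros b Hb. apply HM.
    assert (INR k * (b - c) > INR k * (Rabs M / INR k)) by (apply Rmult_gt_compat_l; lra).
    replace (INR k * (Rabs M / INR k)) with (Rabs M) in H by (field; lra).
    pose proof (Rle_abs M). lra.
  - apply half_lim; auto.
Qed.

Lemma phik_left_lim (phi : R -> C) (Hev : forall x, phi (- x) = phi x) (Hex : forall a b, ex_RInt phi a b)
  (H1 : is_RInt_gen phi (Rbar_locally m_infty) (Rbar_locally p_infty) (RtoC 1)) (k : nat) c :
  0 < INR k -> filterlim (fun a => RIntC (phi_kc phi k c) a c) (Rbar_locally m_infty) (locally (RtoC (/ 2))).
Proof.
  intros Hk. apply filterlim_ext with (fun a => RIntC phi 0 (INR k * (c - a))).
  { intros a. symmetry. apply phik_left; auto. }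
  apply (filterlim_comp _ _ _ (fun a => INR k * (c - a)) (fun y => RIntC phi 0 y) _ (Rbar_locally p_infty)).
  - intros P [M HM]. exists (c - Rabs M / INR k). intros b Hb. apply HM.
    assert (INR k * (c - b) > INR k * (Rabs M / INR k)) by (apply Rmult_gt_compat_l; lra).
    replace (INR k * (Rabs M / INR k)) with (Rabs M) in H by (field; lra).
    pose proof (Rle_abs M). lra.
  - apply half_lim; auto.
Qed.

Lemma HF_Cminus (u v : C) : filterlim (fun p : C * C => Cminus (fst p) (snd p))
   (filter_prod (locally u) (locally v)) (locally (Cminus u v)).
Proof. apply (C_minus_lim (filter_prod (locally u) (locally v))); [apply lim_fst | apply lim_snd]; apply locally_filter. Qed.

Lemma ball_Cmod (x y : C) (e : posreal) : ball x e y -> Cmod (Cminus y x) < 2 * e.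
Proof.
  intros H. apply C_NormedModule_mixin_compat2 in H.
  assert (sqrt 2 < sqrt (2*2)) by (apply sqrt_lt_1; lra). rewrite sqrt_square in H0 by lra.
  destruct e as [e He]; simpl in *. change (Cmod (Cminus y x) < sqrt 2 * e) in H. nra.
Qed.

Lemma atan_int (k c u v : R) :
  is_RInt (fun x => k / (1 + (k * (x - c)) ^ 2)) u v (atan (k * (v - c)) - atan (k * (u - c))).
Proof.
  apply (is_RInt_derive (V:=R_CompleteNormedModule) (fun x => atan (k * (x - c)))).
  - intros x _.
    assert (Ha : is_derive atan (k * (x - c)) (/ (1 + (k * (x - c)) ^ 2))).
    { apply is_derive_Reals, derivable_pt_lim_atan. }
    assert (Hg : is_derive (fun y => k * (y - c)) x k).
    { auto_derive; [exact I| ring]. }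
    assert (H := is_derive_comp atan (fun y => k * (y - c)) x _ _ Ha Hg).
    exact H.
  - intros x _. apply (ex_derive_continuous (V:=R_NormedModule)). auto_derive.
    pose proof (pow2_ge_0 (k * (x - c))). lra.
Qed.

Lemma Cmod_phik (phi : R -> C) k c x : Cmod (phi_kc phi k c x) = INR k * Cmod (phi (INR k * (x - c))).
Proof. unfold phi_kc. rewrite Cmod_mult, Cmod_R, Rabs_pos_eq by apply pos_INR. reflexivity. Qed.

Lemma phik_bound1 (phi : R -> C) (Q : R) (M : nat) c :
  (forall y, Cmod (phi y) <= Q / (1 + y ^ 2) ^ (M + 2)) ->
  forall k x, Cmod (phi_kc phi k c x) <= INR k * Q * wt M c x.
Proof.
  intros HQ k x. rewrite Cmod_phik. destruct k as [|k].
  - simpl. lra.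
  - assert (Hk : 1 <= INR (S k)) by (rewrite S_INR; pose proof (pos_INR k); lra).
    rewrite Rmult_assoc. apply Rmult_le_compat_l; [lra|].
    eapply Rle_trans; [apply HQ|]. unfold wt, Rdiv.
    assert (HQ0 : 0 <= Q).
    { specialize (HQ 0). pose proof (Cmod_ge_0 (phi 0)).
      assert (0 < / (1 + 0 ^ 2) ^ (M + 2)) by (apply Rinv_0_lt_compat, pow_lt; simpl; lra). 
      unfold Rdiv in HQ. nra. }
    apply Rmult_le_compat_l; [exact HQ0|].
    apply Rinv_le_contravar. apply pow_lt. pose proof (pow2_ge_0 (x - c)). lra.
    apply pow_incr. split. pose proof (pow2_ge_0 (x - c)). lra.
    rewrite Rpow_mult_distr. pose proof (pow2_ge_0 (x - c)).
    assert (1 <= INR (S k) ^ 2) by nra. nra.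
Qed.

Lemma phik_far (phi : R -> C) (Q : R) (M : nat) c (delta : R) :
  (forall y, Cmod (phi y) <= Q / (1 + y ^ 2) ^ (M + 2)) -> 0 < Q -> 0 < delta ->
  forall k x, 1 <= INR k -> delta <= Rabs (x - c) ->
  Cmod (phi_kc phi k c x) <= Q * (1 + / delta ^ 2) ^ (M + 2) / INR k * wt M c x.
Proof.
  intros HQ HQ0 Hd k x Hk Hx. rewrite Cmod_phik.
  set (t := (x - c) ^ 2). set (P := (M + 2)%nat).
  assert (Ht : delta ^ 2 <= t).
  { unfold t. rewrite <- (pow2_abs (x - c)). pose proof (Rabs_pos (x - c)). nra. }
  assert (Hd2 : 0 < delta ^ 2) by (apply pow_lt; lra).
  set (d := / delta ^ 2).
  assert (Hd0 : 0 < d) by (apply Rinv_0_lt_compat; lra).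
  assert (Htd : 1 <= t * d).
  { unfold d. apply Rmult_le_reg_r with (delta ^ 2); [lra|].
    rewrite Rmult_assoc, Rinv_l, Rmult_1_r by lra. lra. }
  set (y := INR k * (x - c)).
  assert (Hy : y ^ 2 = INR k ^ 2 * t) by (unfold y, t; ring).
  eapply Rle_trans. apply Rmult_le_compat_l; [lra|apply HQ].
  fold P. unfold wt. fold t. fold P.
  assert (Ht0 : 0 <= t) by (unfold t; apply pow2_ge_0).
  assert (A1 : 0 < (1 + y ^ 2) ^ P) by (apply pow_lt; pose proof (pow2_ge_0 y); lra).
  assert (A2 : 0 < (1 + t) ^ P) by (apply pow_lt; lra).
  assert (Key : INR k ^ 2 * (1 + t) ^ P <= (1 + d) ^ P * (1 + y ^ 2) ^ P).
  { rewrite <- Rpow_mult_distr.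
    assert (B1 : INR k ^ 2 * (1 + t) <= (1 + d) * (1 + y ^ 2)).
    { rewrite Hy. assert (INR k ^ 2 <= INR k ^ 2 * (t * d)) by (pose proof (pow2_ge_0 (INR k)); nra).
      nra. }
    assert (B2 : (INR k ^ 2 * (1 + t)) ^ P <= ((1 + d) * (1 + y ^ 2)) ^ P).
    { apply pow_incr. split; [|exact B1]. pose proof (pow2_ge_0 (INR k)); nra. }
    eapply Rle_trans; [|exact B2]. rewrite Rpow_mult_distr.
    apply Rmult_le_compat_r; [lra|].
    assert (1 <= INR k ^ 2) by nra.
    unfold P. replace (M + 2)%nat with (S (S M)) by lia.
    rewrite <- (pow_1 (INR k ^ 2)) at 1. apply Rle_pow; [lra|lia]. }
  unfold Rdiv. 
  apply Rmult_le_reg_r with (INR k * (1 + y ^ 2) ^ P * (1 + t) ^ P).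
  { apply Rmult_lt_0_compat; [apply Rmult_lt_0_compat|]; lra. }
  replace (INR k * (Q * / (1 + y ^ 2) ^ P) * (INR k * (1 + y ^ 2) ^ P * (1 + t) ^ P))
    with (Q * (INR k ^ 2 * (1 + t) ^ P)) by (field; lra).
  replace (Q * (1 + d) ^ P * / INR k * / (1 + t) ^ P * (INR k * (1 + y ^ 2) ^ P * (1 + t) ^ P))
    with (Q * ((1 + d) ^ P * (1 + y ^ 2) ^ P)) by (field; lra).
  apply Rmult_le_compat_l; lra.
Qed.

Lemma phik_near (phi : R -> C) (Q1 : R) c :
  (forall y, Cmod (phi y) <= Q1 / (1 + y ^ 2) ^ 1) ->
  forall k x, Cmod (phi_kc phi k c x) <= Q1 * (INR k / (1 + (INR k * (x - c)) ^ 2)).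
Proof.
  intros HQ k x. rewrite Cmod_phik. specialize (HQ (INR k * (x - c))). rewrite pow_1 in HQ.
  pose proof (pos_INR k). unfold Rdiv in *.
  replace (Q1 * (INR k * / (1 + (INR k * (x - c)) ^ 2))) with (INR k * (Q1 * / (1 + (INR k * (x - c)) ^ 2))) by ring.
  apply Rmult_le_compat_l; lra.
Qed.

Lemma half_bound_r (G : R -> C) (nb fb : R -> R) c delta b e1 NB FB :
  0 < delta -> c + delta <= b -> (forall u v, ex_RInt G u v) ->
  (forall u v, ex_RInt nb u v) -> (forall u v, ex_RInt fb u v) -> (forall x, 0 <= nb x) -> 0 <= e1 ->
  (forall x, c < x <= c + delta -> Cmod (G x) <= e1 * nb x) ->
  (forall x, c + delta <= x -> Cmod (G x) <= fb x) ->
  RInt nb c (c + delta) <= NB -> RInt fb (c + delta) b <= FB ->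
  Cmod (RIntC G c b) <= 2 * (e1 * NB) + 2 * FB.
Proof.
  intros Hd Hb HG Hnb Hfb Hnb0 He1 Hnear Hfar HNB HFB.
  rewrite <- (RInt_Chasles (V:=C_R_CompleteNormedModule) G c (c + delta) b) by auto.
  change (plus ?x ?y) with (Cplus x y).
  eapply Rle_trans; [apply Cmod_triangle|].
  set (G' := fun x => if Rle_dec x c then RtoC 0 else G x).
  assert (E : forall x, Rmin c (c + delta) < x < Rmax c (c + delta) -> G x = G' x).
  { intros x Hx. rewrite Rmin_left, Rmax_right in Hx by lra. unfold G'.
    destruct (Rle_dec x c); [lra|reflexivity]. }
  assert (EG' : ex_RInt G' c (c + delta)) by (eapply ex_RInt_ext; [exact E|apply HG]).
  rewrite (RInt_ext (V:=C_R_CompleteNormedModule) G G' c (c + delta) E).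
  assert (B1 : Cmod (RIntC G' c (c + delta)) <= 2 * RInt (fun x => e1 * nb x) c (c + delta)).
  { apply norm_RInt_bound; auto.
    - apply (ex_RInt_scal (V:=R_NormedModule) nb). apply Hnb.
    - lra.
    - intros x Hx. unfold G'. destruct (Rle_dec x c).
      + rewrite Cmod_0. pose proof (Hnb0 x). nra.
      + apply Hnear. lra. }
  rewrite (RInt_scal (V:=R_CompleteNormedModule) nb) in B1 by apply Hnb.
  change (scal e1 ?z) with (e1 * z) in B1.
  assert (B2 : Cmod (RIntC G (c + delta) b) <= 2 * RInt fb (c + delta) b).
  { apply norm_RInt_bound; [apply HG|apply Hfb|lra|intros x Hx; apply Hfar; lra]. }
  assert (e1 * RInt nb c (c + delta) <= e1 * NB) by (apply Rmult_le_compat_l; lra).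
  lra.
Qed.

Lemma half_bound_l (G : R -> C) (nb fb : R -> R) c delta a e1 NB FB :
  0 < delta -> a <= c - delta -> (forall u v, ex_RInt G u v) ->
  (forall u v, ex_RInt nb u v) -> (forall u v, ex_RInt fb u v) -> (forall x, 0 <= nb x) -> 0 <= e1 ->
  (forall x, c - delta <= x < c -> Cmod (G x) <= e1 * nb x) ->
  (forall x, x <= c - delta -> Cmod (G x) <= fb x) ->
  RInt nb (c - delta) c <= NB -> RInt fb a (c - delta) <= FB ->
  Cmod (RIntC G a c) <= 2 * (e1 * NB) + 2 * FB.
Proof.
  intros Hd Hb HG Hnb Hfb Hnb0 He1 Hnear Hfar HNB HFB.
  rewrite <- (RInt_Chasles (V:=C_R_CompleteNormedModule) G a (c - delta) c) by auto.
  change (plus ?x ?y) with (Cplus x y).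
  eapply Rle_trans; [apply Cmod_triangle|].
  set (G' := fun x => if Rle_dec c x then RtoC 0 else G x).
  assert (E : forall x, Rmin (c - delta) c < x < Rmax (c - delta) c -> G x = G' x).
  { intros x Hx. rewrite Rmin_left, Rmax_right in Hx by lra. unfold G'.
    destruct (Rle_dec c x); [lra|reflexivity]. }
  assert (EG' : ex_RInt G' (c - delta) c) by (eapply ex_RInt_ext; [exact E|apply HG]).
  rewrite (RInt_ext (V:=C_R_CompleteNormedModule) G G' (c - delta) c E).
  assert (B1 : Cmod (RIntC G' (c - delta) c) <= 2 * RInt (fun x => e1 * nb x) (c - delta) c).
  { apply norm_RInt_bound; auto.
    - apply (ex_RInt_scal (V:=R_NormedModule) nb). apply Hnb.
    - lra.
    - intros x Hx. unfold G'. destruct (Rle_dec c x).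
      + rewrite Cmod_0. pose proof (Hnb0 x). nra.
      + apply Hnear. lra. }
  rewrite (RInt_scal (V:=R_CompleteNormedModule) nb) in B1 by apply Hnb.
  change (scal e1 ?z) with (e1 * z) in B1.
  assert (B2 : Cmod (RIntC G a (c - delta)) <= 2 * RInt fb a (c - delta)).
  { apply norm_RInt_bound; [apply HG|apply Hfb|lra|intros x Hx; apply Hfar; lra]. }
  assert (e1 * RInt nb (c - delta) c <= e1 * NB) by (apply Rmult_le_compat_l; lra).
  lra.
Qed.
Lemma is_RInt_lin2 (u v : R -> R) a b lu lv p q :
  is_RInt u a b lu -> is_RInt v a b lv ->
  is_RInt (fun t => p * u t + q * v t) a b (p * lu + q * lv).
Proof.
  intros Hu Hv.
  apply (is_RInt_plus (V:=R_NormedModule) (fun t => p * u t) (fun t => q * v t)).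
  - apply (is_RInt_scal (V:=R_NormedModule) u). exact Hu.
  - apply (is_RInt_scal (V:=R_NormedModule) v). exact Hv.
Qed.
Lemma is_RInt_eql {V : NormedModule R_AbsRing} (f : R -> V) a b l l' :
  is_RInt f a b l -> l = l' -> is_RInt f a b l'.
Proof. intros H ->; exact H. Qed.
Lemma is_RInt_Cmult_l (g : R -> C) (L : C) a b l :
  is_RInt g a b l -> is_RInt (fun x => Cmult L (g x)) a b (Cmult L l).
Proof.
  intros H.
  assert (H1 : is_RInt (fun t => fst (g t)) a b (fst l)).
  { apply (is_RInt_fct_extend_fst (U:=R_NormedModule) (V:=R_NormedModule)). exact H. }
  assert (H2 : is_RInt (fun t => snd (g t)) a b (snd l)).
  { apply (is_RInt_fct_extend_snd (U:=R_NormedModule) (V:=R_NormedModule)). exact H. }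
  apply (is_RInt_fct_extend_pair (U:=R_NormedModule) (V:=R_NormedModule)
    (fun x => Cmult L (g x)) a b).
  - destruct L as [p q]. 
    eapply is_RInt_ext. 2:{ eapply is_RInt_eql. apply (is_RInt_lin2 _ _ _ _ _ _ p (-q) H1 H2). simpl; ring. }
    intros x _. simpl. ring.
  - destruct L as [p q]. 
    eapply is_RInt_ext. 2:{ eapply is_RInt_eql. apply (is_RInt_lin2 _ _ _ _ _ _ q p H1 H2). simpl; ring. }
    intros x _. simpl. ring.
Qed.

Lemma split_int (f phk : R -> C) L u v :
  ex_RInt (fun x => Cmult (Cminus (f x) L) (phk x)) u v -> ex_RInt phk u v ->
  RIntC (fun x => Cmult (f x) (phk x)) u v =
  Cplus (RIntC (fun x => Cmult (Cminus (f x) L) (phk x)) u v) (Cmult L (RIntC phk u v)).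
Proof.
  intros H1 H2.
  assert (H3 : is_RInt (fun x => Cmult L (phk x)) u v (Cmult L (RIntC phk u v))).
  { apply is_RInt_Cmult_l. apply (RInt_correct (V:=C_R_CompleteNormedModule)), H2. }
  apply (is_RInt_unique (V:=C_R_CompleteNormedModule)).
  assert (H4 := is_RInt_plus (V:=C_R_NormedModule) _ _ u v _ _
     (RInt_correct (V:=C_R_CompleteNormedModule) _ _ _ H1) H3).
  eapply is_RInt_ext; [|exact H4].
  intros x _. change (Cplus (Cmult (Cminus (f x) L) (phk x)) (Cmult L (phk x)) = Cmult (f x) (phk x)). ring.
Qed.

Lemma ball_R (x y : R) (e : posreal) : Rabs (y - x) < e -> ball x e y.
Proof. intros H. exact H. Qed.

Lemma Cmod_minus_le (u v : C) : Cmod (Cminus u v) <= Cmod u + Cmod v.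
Proof. unfold Cminus. eapply Rle_trans; [apply Cmod_triangle|]. rewrite Cmod_opp. lra. Qed.

Lemma Cmod5 (u v w p s q t : C) :
  Cmod (Cplus (Copp u) (Cplus (Cplus v w) (Cplus (Cmult p s) (Cmult q t)))) <=
  Cmod u + Cmod v + Cmod w + Cmod p * Cmod s + Cmod q * Cmod t.
Proof.
  eapply Rle_trans; [apply Cmod_triangle|]. rewrite Cmod_opp.
  eapply Rle_trans; [apply Rplus_le_compat_l; apply Cmod_triangle|].
  pose proof (Cmod_triangle v w). pose proof (Cmod_triangle (Cmult p s) (Cmult q t)).
  rewrite !Cmod_mult in H0. lra.
Qed.

Lemma e1_bound (e X : R) : 0 < e -> 0 <= X -> 2 * (e / (16 * (X + 1)) * X) <= e / 8.
Proof.
  intros He HX. apply Rmult_le_reg_r with (16 * (X + 1)); [lra|].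
  replace (2 * (e / (16 * (X + 1)) * X) * (16 * (X + 1))) with (2 * e * X) by (field; lra).
  nra.
Qed.

Theorem theorem6p1 (phi : R -> C) :
  Schwartz phi ->
  (forall x : R, phi (- x) = phi x) ->
  is_RInt_gen phi (Rbar_locally m_infty) (Rbar_locally p_infty) (RtoC 1) ->
  forall (f : R -> C) (c : R), SG f ->
    exists I : nat -> C,
      (forall k : nat,
         is_RInt_gen (fun x => Cmult (f x) (phi_kc phi k c x))
           (Rbar_locally m_infty) (Rbar_locally p_infty) (I k)) /\
      filterlim I eventually (locally (f c)).
Proof.
  intros HS Hev Hint f c HSG.
  destruct HSG as [[Hpc Hmid] [C0 [N [HC0 Hgr]]]].
  assert (Hf : PWC f).
  { split.
    - intros a b. destruct (Hpc a b) as [l [Hl _]]. exists l. exact Hl.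
    - intros x. destruct (Hmid x) as [Lp [Lm [H1 [H2 _]]]]. split; eauto. }
  assert (Hphic := phi_cont phi HS).
  assert (Hphiex : forall a b, ex_RInt phi a b).
  { intros a b. apply (ex_RInt_continuous (V:=C_R_CompleteNormedModule)). intros; apply Hphic. }
  assert (Hphikc : forall k x, continuous (phi_kc phi k c) x) by (intros; apply phikc_cont, HS).
  destruct (Hmid c) as [Lp [Lm [HLp [HLm Hfc]]]].
  set (S := Cmod Lp + Cmod Lm).
  assert (HS0 : 0 <= S) by (unfold S; pose proof (Cmod_ge_0 Lp); pose proof (Cmod_ge_0 Lm); lra).
  set (A := fun x => Cmod (f x) + S).
  assert (HA0 : forall x, 0 <= A x) by (intros x; unfold A; pose proof (Cmod_ge_0 (f x)); lra).
  assert (Hfm : PWC (fun x => Cmod (f x))).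
  { apply PWC_ext with (fun x => Cmod (Cminus (f x) (RtoC 0))).
    { intros x. f_equal. ring. }
    apply (PWC_comp2' f (fun _ => RtoC 0) (fun u v => Cmod (Cminus u v)) Hf).
    apply PWC_cont. intros; apply continuous_const. apply HF_Cmodminus. }
  assert (HApwc : PWC A).
  { apply (PWC_comp2' (fun x => Cmod (f x)) (fun _ => S) Rplus Hfm).
    apply PWC_cont. intros; apply continuous_const. apply HF_Rplus. }
  assert (HAex : forall u v, ex_RInt A u v) by (intros u v; apply (PWC_ex_RInt (V:=R_CompleteNormedModule)); exact HApwc).
  assert (HAgr : forall r, 0 < r -> RInt A (- r) r <= (C0 + 2 * S) * (1 + r) ^ (N + 1)).
  { intros r Hr. unfold A.
    rewrite (RInt_plus (V:=R_CompleteNormedModule) (fun x => Cmod (f x)) (fun _ => S)).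
    2: apply (PWC_ex_RInt (V:=R_CompleteNormedModule)), Hfm.
    2: apply ex_RInt_const.
    rewrite RInt_const. change (plus ?x ?y) with (x + y). change (scal ?x ?y) with (x * y).
    specialize (Hgr r Hr).
    assert (P1 : (1 + r) ^ N <= (1 + r) ^ (N + 1)) by (apply Rle_pow; [lra|lia]).
    assert (P2 : 1 + r <= (1 + r) ^ (N + 1)).
    { rewrite <- (pow_1 (1 + r)) at 1. apply Rle_pow; [lra|lia]. }
    assert (C0 * (1 + r) ^ N <= C0 * (1 + r) ^ (N + 1)) by (apply Rmult_le_compat_l; lra).
    assert (2 * S * r <= 2 * S * (1 + r) ^ (N + 1)) by (apply Rmult_le_compat_l; lra).
    lra. }
  set (N' := (N + 1)%nat).
  assert (HC0' : 0 < C0 + 2 * S) by lra.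
  assert (Hawpwc : PWC (aw A N' c)).
  { apply (PWC_comp2' A (wt N' c) Rmult HApwc). apply PWC_cont. apply cont_wt. apply HF_Rmult. }
  assert (Hawe : forall u v, ex_RInt (aw A N' c) u v) by (intros u v; apply (PWC_ex_RInt (V:=R_CompleteNormedModule)); exact Hawpwc).
  destruct (phi_decay phi (N' + 2) HS) as [Q [HQ HQb]].
  destruct (phi_decay phi 1 HS) as [Q1 [HQ1 HQ1b]].
  destruct (aw_total A (C0 + 2 * S) N' c HA0 HAex HC0' HAgr Hawe) as [Ktot HKtot].
  assert (HKtot0 : 0 <= Ktot).
  { specialize (HKtot 0 0 (Rle_refl 0)). rewrite RInt_point in HKtot. exact HKtot. }
  assert (Hgpwc : forall k, PWC (fun x => Cmult (f x) (phi_kc phi k c x))).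
  { intros k. apply (PWC_comp2' f (phi_kc phi k c) Cmult Hf). apply PWC_cont, Hphikc. apply HF_Cmult. }
  assert (Hgex : forall k, exists l, is_RInt_gen (fun x => Cmult (f x) (phi_kc phi k c x))
           (Rbar_locally m_infty) (Rbar_locally p_infty) l).
  { intros k.
    assert (Hkq : 0 <= INR k * Q) by (pose proof (pos_INR k); nra).
    assert (Hhex : forall u v, ex_RInt (fun x => INR k * Q * aw A N' c x) u v).
    { intros u v. apply (ex_RInt_scal (V:=R_NormedModule) (aw A N' c)). apply Hawe. }
    assert (Hh : forall u v, RInt (fun x => INR k * Q * aw A N' c x) u v = INR k * Q * RInt (aw A N' c) u v).
    { intros u v. apply (RInt_scal (V:=R_CompleteNormedModule) (aw A N' c)). apply Hawe. }
    assert (Hsm : forall eps, 0 < eps -> INR k * Q * (eps / (INR k * Q + 1)) <= eps).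
    { intros eps He. apply Rmult_le_reg_r with (INR k * Q + 1); [lra|].
      replace (INR k * Q * (eps / (INR k * Q + 1)) * (INR k * Q + 1)) with (INR k * Q * eps) by (field; lra).
      nra. }
    apply (gen_exists _ (fun x => INR k * Q * aw A N' c x)).
    - intros u v. apply (PWC_ex_RInt (V:=C_R_CompleteNormedModule)), Hgpwc.
    - exact Hhex.
    - intros x. rewrite Cmod_mult. unfold aw.
      replace (INR k * Q * (A x * wt N' c x)) with (A x * (INR k * Q * wt N' c x)) by ring.
      apply Rmult_le_compat. apply Cmod_ge_0. apply Cmod_ge_0.
      unfold A; lra. apply phik_bound1; exact HQb.
    - intros eps He.
      assert (He' : 0 < eps / (INR k * Q + 1)) by (apply Rdiv_lt_0_compat; lra).
      destruct (tail_right A (C0 + 2 * S) N' c HA0 HAex HC0' HAgr Hawe _ He') as [T HT].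
      exists T. intros u v Hu Hv. rewrite Hh.
      eapply Rle_trans; [|apply (Hsm eps He)]. apply Rmult_le_compat_l; [lra|]. apply HT; auto.
    - intros eps He.
      assert (He' : 0 < eps / (INR k * Q + 1)) by (apply Rdiv_lt_0_compat; lra).
      destruct (tail_left A (C0 + 2 * S) N' c HA0 HAex HC0' HAgr Hawe _ He') as [T HT].
      exists T. intros u v Hu Hv. rewrite Hh.
      eapply Rle_trans; [|apply (Hsm eps He)]. apply Rmult_le_compat_l; [lra|]. apply HT; auto. }
  set (I := fun k => RInt_gen (V:=C_R_CompleteNormedModule) (fun x => Cmult (f x) (phi_kc phi k c x))
           (Rbar_locally m_infty) (Rbar_locally p_infty)).
  assert (HI : forall k, is_RInt_gen (fun x => Cmult (f x) (phi_kc phi k c x))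
           (Rbar_locally m_infty) (Rbar_locally p_infty) (I k)).
  { intros k. apply (RInt_gen_correct (V:=C_R_CompleteNormedModule)). apply Hgex. }
  exists I. split; [exact HI|].
  apply filterlim_locally. intros eps.
  set (e := pos eps). assert (He : 0 < e) by (apply cond_pos).
  assert (HPI : 0 < PI) by apply PI_RGT_0.
  set (e1 := e / (16 * (Q1 * PI + 1))).
  assert (He1 : 0 < e1) by (unfold e1; apply Rdiv_lt_0_compat; nra).
  assert (He1b : 2 * (e1 * (Q1 * PI)) <= e / 8) by (apply e1_bound; nra).
  assert (He12 : 0 < e1 / 2) by lra.
  destruct (proj1 (filterlim_locally _ _) HLp (mkposreal _ He12)) as [d1 Hd1].
  destruct (proj1 (filterlim_locally _ _) HLm (mkposreal _ He12)) as [d2 Hd2].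
  assert (nearR : forall x, c < x < c + d1 -> Cmod (Cminus (f x) Lp) <= e1).
  { intros x Hx. assert (B := Hd1 x (ball_R c x d1 ltac:(rewrite Rabs_pos_eq; lra)) (proj1 Hx)).
    apply ball_Cmod in B. simpl in B. lra. }
  assert (nearL : forall x, c - d2 < x < c -> Cmod (Cminus (f x) Lm) <= e1).
  { intros x Hx. assert (B := Hd2 x (ball_R c x d2 ltac:(rewrite Rabs_left; lra)) (proj2 Hx)).
    apply ball_Cmod in B. simpl in B. lra. }
  pose proof (cond_pos d1) as Hd1p. pose proof (cond_pos d2) as Hd2p.
  set (delta := Rmin d1 d2 / 2).
  assert (Hdl : 0 < delta /\ delta < d1 /\ delta < d2).
  { unfold delta. pose proof (Rmin_l d1 d2). pose proof (Rmin_r d1 d2).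
    assert (0 < Rmin d1 d2) by (apply Rmin_glb_lt; lra). lra. }
  destruct Hdl as [Hd0 [Hdd1 Hdd2]].
  set (Far0 := Q * (1 + / delta ^ 2) ^ (N' + 2)).
  assert (HFar0 : 0 <= Far0).
  { unfold Far0. apply Rmult_le_pos; [lra|]. apply pow_le.
    pose proof (Rinv_0_lt_compat (delta ^ 2) (pow_lt delta 2 Hd0)). lra. }
  destruct (nat_above (1 + 16 * Far0 * Ktot / e)) as [K0 HK0].
  exists K0. intros k Hk.
  assert (HkK : INR K0 <= INR k) by (apply le_INR; exact Hk).
  assert (HFK : 0 <= 16 * Far0 * Ktot / e) by (apply Rdiv_le_0_compat; nra).
  assert (Hk1 : 1 <= INR k) by lra.
  assert (Hk0 : 0 < INR k) by lra.
  assert (HFk : 2 * (Far0 / INR k * Ktot) <= e / 8).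
  { assert (16 * Far0 * Ktot <= e * INR k).
    { apply Rmult_le_reg_r with (/ e). apply Rinv_0_lt_compat; lra.
      replace (e * INR k * / e) with (INR k) by (field; lra). unfold Rdiv in HFK, HK0. lra. }
    apply Rmult_le_reg_r with (INR k); [lra|].
    replace (2 * (Far0 / INR k * Ktot) * INR k) with (2 * (Far0 * Ktot)) by (field; lra). nra. }
  apply C_NormedModule_mixin_compat1.
  set (phk := phi_kc phi k c).
  set (g := fun x => Cmult (f x) (phk x)).
  assert (HIk := HI k).
  set (eta := e / (16 * (S + 1))).
  assert (Heta : 0 < eta) by (unfold eta; apply Rdiv_lt_0_compat; lra).
  assert (Heta2 : 2 * eta * (1 + S) = e / 8) by (unfold eta; field; lra).
  destruct (HIk (ball (I k) eta) (locally_ball (I k) (mkposreal eta Heta))) as [Qs Rs [M1 HM1] [M2 HM2] HQR].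
  destruct (proj1 (filterlim_locally _ _) (phik_right_lim phi Hev Hphiex Hint k c Hk0) (mkposreal eta Heta)) as [M3 HM3].
  destruct (proj1 (filterlim_locally _ _) (phik_left_lim phi Hev Hphiex Hint k c Hk0) (mkposreal eta Heta)) as [M4 HM4].
  set (b := Rmax (Rmax M2 M3) (c + delta) + 1).
  set (a := Rmin (Rmin M1 M4) (c - delta) - 1).
  assert (Hb : M2 < b /\ M3 < b /\ c + delta < b).
  { unfold b. pose proof (Rmax_l (Rmax M2 M3) (c + delta)). pose proof (Rmax_r (Rmax M2 M3) (c + delta)).
    pose proof (Rmax_l M2 M3). pose proof (Rmax_r M2 M3). lra. }
  assert (Ha : a < M1 /\ a < M4 /\ a < c - delta).
  { unfold a. pose proof (Rmin_l (Rmin M1 M4) (c - delta)). pose proof (Rmin_r (Rmin M1 M4) (c - delta)).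
    pose proof (Rmin_l M1 M4). pose proof (Rmin_r M1 M4). lra. }
  destruct Hb as [Hb2 [Hb3 Hbd]]. destruct Ha as [Ha1 [Ha4 Had]].
  destruct (HQR a b (HM1 a Ha1) (HM2 b Hb2)) as [y [Hy Hball]]. simpl in Hy.
  apply (is_RInt_unique (V:=C_R_CompleteNormedModule)) in Hy. change (RIntC g a b = y) in Hy.
  assert (B0 := ball_Cmod (I k) y (mkposreal eta Heta) Hball). simpl in B0.
  assert (B1 := ball_Cmod _ _ _ (HM3 b Hb3)). simpl in B1.
  assert (B2 := ball_Cmod _ _ _ (HM4 a Ha4)). simpl in B2.
  set (R1 := RIntC phk c b) in *. set (R2 := RIntC phk a c) in *.
  change (Cmod (Cminus R1 (RtoC (/ 2))) < 2 * eta) in B1.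
  change (Cmod (Cminus R2 (RtoC (/ 2))) < 2 * eta) in B2.
  assert (Hphkex : forall u v, ex_RInt phk u v).
  { intros u v. apply (ex_RInt_continuous (V:=C_R_CompleteNormedModule)). intros; apply Hphikc. }
  assert (HGex : forall L u v, ex_RInt (fun x => Cmult (Cminus (f x) L) (phk x)) u v).
  { intros L u v. apply (PWC_ex_RInt (V:=C_R_CompleteNormedModule)).
    apply (PWC_comp2' (fun x => Cminus (f x) L) phk Cmult).
    - apply (PWC_comp2' f (fun _ => L) Cminus Hf). apply PWC_cont; intros; apply continuous_const. apply HF_Cminus.
    - apply PWC_cont, Hphikc.
    - apply HF_Cmult. }
  assert (Hgex' : forall u v, ex_RInt g u v).
  { intros u v. apply (PWC_ex_RInt (V:=C_R_CompleteNormedModule)), Hgpwc. }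
  set (Er := RIntC (fun x => Cmult (Cminus (f x) Lp) (phk x)) c b).
  set (El := RIntC (fun x => Cmult (Cminus (f x) Lm) (phk x)) a c).
  assert (Dx : y = Cplus (Cplus El (Cmult Lm R2)) (Cplus Er (Cmult Lp R1))).
  { rewrite <- Hy. rewrite <- (RInt_Chasles (V:=C_R_CompleteNormedModule) g a c b) by auto.
    unfold g, El, Er, R1, R2. rewrite (split_int f phk Lm a c) by auto. rewrite (split_int f phk Lp c b) by auto.
    reflexivity. }
  set (nb := fun x => Q1 * (INR k / (1 + (INR k * (x - c)) ^ 2))).
  assert (Hnbis : forall u v, is_RInt nb u v (Q1 * (atan (INR k * (v - c)) - atan (INR k * (u - c))))).
  { intros u v. apply (is_RInt_scal (V:=R_NormedModule) _ u v Q1 _ (atan_int (INR k) c u v)). }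
  assert (Hnbex : forall u v, ex_RInt nb u v) by (intros u v; eexists; apply Hnbis).
  assert (Hnb0 : forall x, 0 <= nb x).
  { intros x. unfold nb. apply Rmult_le_pos; [lra|]. apply Rdiv_le_0_compat; [lra|].
    pose proof (pow2_ge_0 (INR k * (x - c))). lra. }
  assert (Hnbv : forall u v, RInt nb u v <= Q1 * PI).
  { intros u v. rewrite (is_RInt_unique (V:=R_CompleteNormedModule) _ _ _ _ (Hnbis u v)).
    apply Rmult_le_compat_l; [lra|].
    pose proof (atan_bound (INR k * (v - c))). pose proof (atan_bound (INR k * (u - c))). lra. }
  set (fb := fun x => Far0 / INR k * aw A N' c x).
  assert (Hfbex : forall u v, ex_RInt fb u v).
  { intros u v. apply (ex_RInt_scal (V:=R_NormedModule) (aw A N' c)). apply Hawe. }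
  assert (Hfbv : forall u v, u <= v -> RInt fb u v <= Far0 / INR k * Ktot).
  { intros u v Huv. unfold fb. rewrite (RInt_scal (V:=R_CompleteNormedModule) (aw A N' c)) by apply Hawe.
    change (scal ?x ?y) with (x * y). apply Rmult_le_compat_l.
    apply Rdiv_le_0_compat; lra. apply HKtot; exact Huv. }
  assert (Hfar : forall L x, Cmod L <= S -> delta <= Rabs (x - c) ->
            Cmod (Cmult (Cminus (f x) L) (phk x)) <= fb x).
  { intros L x HL Hx. rewrite Cmod_mult. unfold fb, aw.
    replace (Far0 / INR k * (A x * wt N' c x)) with (A x * (Far0 / INR k * wt N' c x)) by ring.
    apply Rmult_le_compat. apply Cmod_ge_0. apply Cmod_ge_0.
    - pose proof (Cmod_minus_le (f x) L). unfold A. lra.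
    - unfold Far0, phk. apply phik_far; auto. }
  assert (HEr : Cmod Er <= 2 * (e1 * (Q1 * PI)) + 2 * (Far0 / INR k * Ktot)).
  { apply (half_bound_r _ nb fb c delta b e1); auto; try lra.
    - intros x Hx. rewrite Cmod_mult. apply Rmult_le_compat. apply Cmod_ge_0. apply Cmod_ge_0.
      apply nearR; lra. unfold phk, nb. apply phik_near. exact HQ1b.
    - intros x Hx. apply Hfar. unfold S; pose proof (Cmod_ge_0 Lm); lra. rewrite Rabs_pos_eq; lra.
    - apply Hfbv; lra. }
  assert (HEl : Cmod El <= 2 * (e1 * (Q1 * PI)) + 2 * (Far0 / INR k * Ktot)).
  { apply (half_bound_l _ nb fb c delta a e1); auto; try lra.
    - intros x Hx. rewrite Cmod_mult. apply Rmult_le_compat. apply Cmod_ge_0. apply Cmod_ge_0.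
      apply nearL; lra. unfold phk, nb. apply phik_near. exact HQ1b.
    - intros x Hx. apply Hfar. unfold S; pose proof (Cmod_ge_0 Lp); lra. rewrite Rabs_left1; lra.
    - apply Hfbv; lra. }
  assert (Eq : Cminus (I k) (f c) = Cplus (Copp (Cminus y (I k))) (Cplus (Cplus El Er)
                 (Cplus (Cmult Lm (Cminus R2 (RtoC (/ 2)))) (Cmult Lp (Cminus R1 (RtoC (/ 2))))))).
  { rewrite Hfc, Dx. ring. }
  change (Cmod (Cminus (I k) (f c)) < e). rewrite Eq.
  eapply Rle_lt_trans; [apply Cmod5|].
  pose proof (Cmod_ge_0 Lp). pose proof (Cmod_ge_0 Lm).
  assert (Cmod Lm * Cmod (Cminus R2 (RtoC (/ 2))) <= Cmod Lm * (2 * eta)) by (apply Rmult_le_compat_l; lra).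
  assert (Cmod Lp * Cmod (Cminus R1 (RtoC (/ 2))) <= Cmod Lp * (2 * eta)) by (apply Rmult_le_compat_l; lra).
  unfold S in Heta2. nra.
Qed.
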